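(* Let $\mathcal A$ be a linear time-invariant algorithm written as a sequence of $m$ update equations executed in the order $(1,\dots,m)$ in each iteration, each update equation containing at most one oracle call. For any cyclic permutation $\tilde\pi=(l+1,\dots,m,1,\dots,l)$ of $(1,\dots,m)$, the algorithm $P_{\tilde\pi}\mathcal A$ and $\mathcal A$ are shift-equivalent.
   Context: A linear time-invariant algorithm has state $x^k$, oracle arguments $y^k$ and oracle outputs $u^k$ related by $x^{k+1}=Ax^k+Bu^k$, $y^k=Cx^k+Du^k$, $u^k=\phi(y^k)$ for real matrices $(A,B,C,D)$ and an oracle map $\phi$; in practice it is written as a list of update equations (each linear in the states and oracle outputs) executed sequentially within each iteration. For a permutation $\tilde\pi$ of $(1,\dots,m)$, $P_{\tilde\pi}\mathcal A$ denotes the algorithm that performs the update equations of $\mathcal A$ in the order $\tilde\pi$ at each iteration. The oracle sequence of an algorithm is the sequence of oracle calls (oracle together with its argument) made when it is run. Two algorithms are shift-equivalent (on a set of problems) if for any problem in the set and any initialization of one algorithm there exists an initialization of the other such that their oracle sequences match up to a prefix (i.e. agree after deleting finitely many initial oracle calls from one of them). *)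

(* Defs.v *)
From HB Require Import structures.
From mathcomp Require Import all_boot all_order all_algebra all_fingroup.
Set Implicit Arguments. Unset Strict Implicit. Unset Printing Implicit Defensive.
Import GRing.Theory.
Local Open Scope ring_scope.

(* An algorithm manipulates n variables, each valued in a module V over R.
   Oracles are labelled by O; a problem is an assignment phi : O -> V -> V
   of a map to every oracle label. *)

Record oracle_call (R : nzRingType) (O : Type) (n : nat) := OracleCall {
  oc_label : O;
  oc_arg   : 'I_n -> R;       (* argument = sum_i oc_arg i *: x_i *)
  oc_coef  : R
}.

Record update_eq (R : nzRingType) (O : Type) (n : nat) := UpdateEq {
  ue_target : 'I_n;
  ue_lin    : 'I_n -> R;
  ue_oracle : option (oracle_call R O n)
}.

Section Semantics.
Variables (R : nzRingType) (V : lmodType R) (O : Type) (n : nat).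

Definition state := 'I_n -> V.

Definition lincomb (c : 'I_n -> R) (x : state) : V := \sum_(i < n) c i *: x i.

Definition upd (x : state) (t : 'I_n) (v : V) : state :=
  fun j => if j == t then v else x j.

Definition exec_eq (phi : O -> V -> V) (st : state * seq (O * V))
    (e : update_eq R O n) : state * seq (O * V) :=
  let: (x, tr) := st in
  match ue_oracle e with
  | None => (upd x (ue_target e) (lincomb (ue_lin e) x), tr)
  | Some oc =>
      let y := lincomb (oc_arg oc) x in
      let u := phi (oc_label oc) y in
      (upd x (ue_target e) (lincomb (ue_lin e) x + oc_coef oc *: u),
       rcons tr (oc_label oc, y))
  end.

Definition exec_iter (phi : O -> V -> V) (A : seq (update_eq R O n))
    (st : state * seq (O * V)) := foldl (exec_eq phi) st A.

Definition run (phi : O -> V -> V) (A : seq (update_eq R O n)) (x0 : state)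
    (k : nat) := iter k (exec_iter phi A) (x0, [::]).

(* The (infinite) oracle sequence, as a function of the call index;
   [None] past its end (only happens when the algorithm makes no oracle call
   per iteration, in which case the sequence is empty).  The i-th call
   (0-based) is made within the first i+1 iterations whenever each iteration
   makes at least one call. *)
Definition oracle_seq (phi : O -> V -> V) (A : seq (update_eq R O n))
    (x0 : state) (i : nat) : option (O * V) :=
  nth None (map Some (run phi A x0 i.+1).2) i.

Definition match_up_to_prefix (s1 s2 : nat -> option (O * V)) : Prop :=
  exists d : nat, (forall i, s1 (d + i) = s2 i) \/ (forall i, s2 (d + i) = s1 i).

Definition shift_equiv (A B : seq (update_eq R O n)) : Prop :=
  forall phi : O -> V -> V,
    (forall x0 : state, exists y0 : state,
        match_up_to_prefix (oracle_seq phi A x0) (oracle_seq phi B y0)) /\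
    (forall y0 : state, exists x0 : state,
        match_up_to_prefix (oracle_seq phi A x0) (oracle_seq phi B y0)).

End Semantics.

(* P_pi A : the algorithm executing the m update equations of A in the order
   pi(0), ..., pi(m-1) (0-based) at each iteration. *)
Definition permute_alg (R : nzRingType) (O : Type) (n m : nat)
    (A : m.-tuple (update_eq R O n)) (pi : 'S_m) : seq (update_eq R O n) :=
  [seq tnth A (pi i) | i : 'I_m].

(* Main.v *)
Require Import Defs.
From HB Require Import structures.
From mathcomp Require Import all_boot all_order all_algebra all_fingroup.
From mathcomp Require Import zify.

Set Implicit Arguments. Unset Strict Implicit. Unset Printing Implicit Defensive.

Section Helpers.
Variables (R : nzRingType) (V : lmodType R) (O : Type) (n : nat).
Variable phi : O -> V -> V.

Notation EQ := (update_eq R O n).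
Notation ST := (state V n).

Lemma exec_eq_tr (x : ST) tr (e : EQ) :
  exec_eq phi (x, tr) e =
  ((exec_eq phi (x, [::]) e).1, tr ++ (exec_eq phi (x, [::]) e).2).
Proof. by case: e => t lin [oc|] //=; rewrite ?cats1 ?cats0. Qed.

Lemma fcons (L : seq EQ) st e :
  foldl (exec_eq phi) st (e :: L) = foldl (exec_eq phi) (exec_eq phi st e) L.
Proof. by []. Qed.

Lemma foldl_tr (L : seq EQ) (x : ST) tr :
  foldl (exec_eq phi) (x, tr) L =
  ((foldl (exec_eq phi) (x, [::]) L).1, tr ++ (foldl (exec_eq phi) (x, [::]) L).2).
Proof.
elim: L x tr => [|e L IH] x tr; first by rewrite /= cats0.
rewrite !fcons exec_eq_tr [exec_eq phi (x, [::]) e]surjective_pairing.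
rewrite IH [in RHS]IH /= catA. by [].
Qed.

Definition FL (L : seq EQ) (x : ST) := (foldl (exec_eq phi) (x, [::]) L).1.
Definition TL (L : seq EQ) (x : ST) := (foldl (exec_eq phi) (x, [::]) L).2.
Definition cnt (L : seq EQ) := count (fun e => isSome (ue_oracle e)) L.

Lemma size_TL (L : seq EQ) (x : ST) : size (TL L x) = cnt L.
Proof.
rewrite /TL /cnt; elim: L x => [|e L IH] x //.
rewrite fcons [exec_eq phi (x, [::]) e]surjective_pairing foldl_tr /= size_cat IH.
case: e => t lin [oc|] //=.
Qed.

Lemma FL_cat (L1 L2 : seq EQ) (x : ST) : FL (L1 ++ L2) x = FL L2 (FL L1 x).
Proof.
by rewrite /FL foldl_cat [foldl _ (x, [::]) L1]surjective_pairing foldl_tr.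
Qed.

Lemma TL_cat (L1 L2 : seq EQ) (x : ST) : TL (L1 ++ L2) x = TL L1 x ++ TL L2 (FL L1 x).
Proof.
by rewrite /TL foldl_cat [foldl _ (x, [::]) L1]surjective_pairing foldl_tr.
Qed.

Lemma run_S (L : seq EQ) (x0 : ST) k :
  run phi L x0 k.+1 =
  (FL L (run phi L x0 k).1, (run phi L x0 k).2 ++ TL L (run phi L x0 k).1).
Proof.
rewrite /run iterS -/(run phi L x0 k) /exec_iter.
by rewrite [run phi L x0 k]surjective_pairing foldl_tr.
Qed.

Lemma size_run (L : seq EQ) (x0 : ST) k : size (run phi L x0 k).2 = cnt L * k.
Proof.
elim: k => [|k IH]; first by rewrite muln0.
by rewrite run_S /= size_cat IH size_TL mulnS addnC.
Qed.

Lemma run_prefix (L : seq EQ) (x0 : ST) i k : i < k ->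
  exists r, (run phi L x0 k).2 = (run phi L x0 i.+1).2 ++ r.
Proof.
elim: k => [//|k IH]; rewrite ltnS leq_eqVlt => /orP [/eqP -> | /IH [r Hr]].
  by exists [::]; rewrite cats0.
by exists (r ++ TL L (run phi L x0 k).1); rewrite run_S /= Hr catA.
Qed.

Lemma oseq_k (L : seq EQ) (x0 : ST) i k : 0 < cnt L -> i < k ->
  oracle_seq phi L x0 i = nth None (map Some (run phi L x0 k).2) i.
Proof.
move=> c0 ik; rewrite /oracle_seq.
have [r ->] := @run_prefix L x0 i k ik.
rewrite map_cat nth_cat size_map size_run.
have -> : i < cnt L * i.+1 by rewrite (leq_trans (ltnSn i)) // leq_pmull.
by [].
Qed.

Lemma oseq_none (L : seq EQ) (x0 : ST) i : cnt L = 0 -> oracle_seq phi L x0 i = None.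
Proof.
move=> c0; rewrite /oracle_seq nth_default // size_map size_run c0.
by [].
Qed.

Lemma rot_inv (P S : seq EQ) (x0 : ST) k :
  (run phi (P ++ S) x0 k).2 ++ TL P (run phi (P ++ S) x0 k).1
    = TL P x0 ++ (run phi (S ++ P) (FL P x0) k).2 /\
  FL P (run phi (P ++ S) x0 k).1 = (run phi (S ++ P) (FL P x0) k).1.
Proof.
elim: k => [|k [IH1 IH2]]; first by rewrite /run /= cats0.
rewrite !run_S /= -IH2 !TL_cat !FL_cat; split; last by [].
by rewrite -!catA catA IH1 -catA.
Qed.

Lemma core (P S : seq EQ) (x0 : ST) i :
  oracle_seq phi (P ++ S) x0 (size (TL P x0) + i) =
  oracle_seq phi (S ++ P) (FL P x0) i.
Proof.
have cc : cnt (S ++ P) = cnt (P ++ S) by rewrite /cnt !count_cat addnC.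
have [c0|cpos] := posnP (cnt (P ++ S)).
  by rewrite !oseq_none // cc.
set k := (size (TL P x0) + i).+1.
rewrite (@oseq_k _ _ _ k) // (@oseq_k _ _ _ k) ?cc //; last first.
  by rewrite /k ltnS leq_addl.
have [H1 _] := rot_inv P S x0 k.
have Hlt : size (TL P x0) + i < size (run phi (P ++ S) x0 k).2.
  by rewrite size_run /k leq_pmull.
have E : forall T, nth None (map Some (run phi (P ++ S) x0 k).2) (size (TL P x0) + i)
   = nth None (map Some ((run phi (P ++ S) x0 k).2 ++ T)) (size (TL P x0) + i).
  by move=> T; rewrite map_cat nth_cat size_map Hlt.
by rewrite (E (TL P (run phi (P ++ S) x0 k).1)) H1 map_cat nth_cat size_map ltnNge leq_addr /= addKn.
Qed.

End Helpers.

Lemma rot_equiv (R : nzRingType) (V : lmodType R) (O : Type) (n : nat)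
  (P S : seq (update_eq R O n)) : @shift_equiv R V O n (S ++ P) (P ++ S).
Proof.
move=> phi; split.
  move=> x0; exists (FL phi S x0); exists (size (TL phi S x0)); left => i.
  exact: core.
move=> y0; exists (FL phi P y0); exists (size (TL phi P y0)); right => i.
exact: core.
Qed.

Lemma permute_rot (R : nzRingType) (O : Type) (n m : nat)
    (A : m.-tuple (update_eq R O n)) (pi : 'S_m) (l : nat) :
  l <= m ->
  (forall i : 'I_m, val (pi i) = (l + val i) %% m) ->
  permute_alg A pi = drop l A ++ take l A.
Proof.
move=> lm Hpi.
case: m A pi lm Hpi => [|m'] A pi lm Hpi.
  rewrite /permute_alg tuple0 /= ?drop_nil ?take_nil; apply: size0nil.
  by rewrite size_map size_enum_ord.
set x0 := tnth A ord0.
apply: (@eq_from_nth _ x0).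
  rewrite /permute_alg size_map size_enum_ord size_cat size_drop size_takel ?size_tuple //; lia.
rewrite /permute_alg size_map size_enum_ord => i Hi.
rewrite (nth_map (Ordinal Hi)) ?size_enum_ord // (tnth_nth x0) Hpi.
have -> : \val (nth (Ordinal Hi) (enum 'I_m'.+1) i) = i by exact: nth_enum_ord.
rewrite nth_cat size_drop size_tuple.
case: (ltnP i (m'.+1 - l)) => h.
  by rewrite nth_drop modn_small //; lia.
rewrite nth_take; last by lia.
have -> : l + i = (i - (m'.+1 - l)) + m'.+1 by lia.
by rewrite modnDr modn_small //; lia.
Qed.

Theorem proposition6p1 (R : nzRingType) (V : lmodType R) (O : Type) (n m : nat)
    (A : m.-tuple (update_eq R O n)) (pi : 'S_m) (l : nat) :
  l <= m ->
  (forall i : 'I_m, val (pi i) = (l + val i) %% m) ->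
  @shift_equiv R V O n (permute_alg A pi) A.
Proof.
move=> lm Hpi; rewrite (@permute_rot R O n m A pi l lm Hpi).
have := @rot_equiv R V O n (take l A) (drop l A).
by rewrite cat_take_drop.
Qed.
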